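(* If $\mathbf X=(X,\mu,T)$ is a nontrivial weak mixing measure preserving system, $S$ is a set of rigidity for $\mathbf X$, and $m\in\mathbb Z\setminus\{0\}$, then $S+m$ is not a set of strong recurrence for $\mathbf X$.
   Context: A measure preserving system is a probability space $(X,\mu)$ with an invertible measure preserving map $T$. $S\subseteq\mathbb Z$ is a set of rigidity for $\mathbf X$ if $S$ is infinite and for all measurable $D\subseteq X$ and $\varepsilon>0$, $\{n\in S:\mu(D\triangle T^nD)>\varepsilon\}$ is finite. $S'\subseteq\mathbb Z$ is a set of strong recurrence for $\mathbf X$ if for every measurable $D$ with $\mu(D)>0$ there is $c>0$ such that $\{n\in S':\mu(D\cap T^nD)>c\}$ is infinite. *)

(* Defs.v *)
From HB Require Import structures.
From mathcomp Require Import all_boot all_order all_algebra.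
From mathcomp Require Import all_classical all_reals all_analysis.
Set Implicit Arguments. Unset Strict Implicit. Unset Printing Implicit Defensive.
Import Order.TTheory GRing.Theory Num.Theory.
Local Open Scope classical_set_scope.
Local Open Scope ring_scope.

Section MPS.
Context (d : measure_display) (X : measurableType d) (R : realType).

Definition mps (mu : probability X R) (T Tinv : X -> X) : Prop :=
  [/\ cancel T Tinv, cancel Tinv T,
      measurable_fun setT T, measurable_fun setT Tinv &
      forall A, measurable A -> mu (T @^-1` A) = mu A].

Definition Tpow (T Tinv : X -> X) (n : int) : X -> X :=
  match n with
  | Posz k => iter k T
  | Negz k => iter k.+1 Tinv
  end.

Definition Timg (T Tinv : X -> X) (n : int) (D : set X) : set X :=
  Tpow T Tinv n @` D.

Definition weak_mixing (mu : probability X R) (T : X -> X) : Prop :=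
  forall A B, measurable A -> measurable B ->
    (fun N : nat => (N%:R^-1 *
       \sum_(n < N) `| fine (mu (A `&` (iter n T @^-1` B)))
                      - fine (mu A) * fine (mu B) |) : R) @ \oo --> 0.

Definition nontrivial (mu : probability X R) : Prop :=
  exists D, measurable D /\ (0 < mu D)%E /\ (mu D < 1)%E.

Definition rigidity_set (mu : probability X R) (T Tinv : X -> X)
    (S : set int) : Prop :=
  ~ finite_set S /\
  forall D (eps : R), measurable D -> 0 < eps ->
    finite_set [set n | S n /\ (eps%:E < mu (D `+` Timg T Tinv n D))%E].

Definition strong_recurrence_set (mu : probability X R) (T Tinv : X -> X)
    (S' : set int) : Prop :=
  forall D, measurable D -> (0 < mu D)%E ->
    exists2 c : R, 0 < c &
      ~ finite_set [set n | S' n /\ (c%:E < mu (D `&` Timg T Tinv n D))%E].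

End MPS.

(* Main.v *)
Require Import Defs.
From HB Require Import structures.
From mathcomp Require Import all_boot all_order all_algebra.
From mathcomp Require Import all_classical all_reals all_analysis.
From mathcomp Require Import zify lra ring.
Import Order.TTheory GRing.Theory Num.Theory.
Local Open Scope classical_set_scope.
Local Open Scope ring_scope.

Section Aux.
Context (d : measure_display) (X : measurableType d) (R : realType).
Variables (mu : probability X R) (T Tinv : X -> X).
Hypothesis HT : mps mu T Tinv.

Let TK : cancel T Tinv. Proof. by case: HT. Qed.
Let TiK : cancel Tinv T. Proof. by case: HT. Qed.

Lemma TpowS z x : Tpow T Tinv (z + 1) x = T (Tpow T Tinv z x).
Proof.
case: z => [k|[|k]].
- by rewrite /= addn1.
- by rewrite /= TiK.
- have -> : Negz k.+1 + 1 = Negz k by apply/eqP; rewrite !NegzE; lia.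
  by rewrite /= TiK.
Qed.

Lemma TpowN z x : Tpow T Tinv (z - 1) x = Tinv (Tpow T Tinv z x).
Proof. by rewrite -{2}(subrK 1 z) TpowS TK. Qed.

Lemma Tpow_add n m x : Tpow T Tinv (n + m) x = Tpow T Tinv n (Tpow T Tinv m x).
Proof.
case: n => k.
- elim: k => [|k IH]; first by rewrite add0r.
  have -> : Posz k.+1 = Posz k + 1 by apply/eqP; lia.
  by rewrite addrAC TpowS IH -TpowS.
- elim: k => [|k IH].
  + have -> : Negz 0 = 0 - 1 by [].
    by rewrite addrAC add0r TpowN.
  + have -> : Negz k.+1 = Negz k - 1 by apply/eqP; rewrite !NegzE; lia.
    by rewrite addrAC TpowN IH -TpowN.
Qed.

Lemma TpowK n : cancel (Tpow T Tinv n) (Tpow T Tinv (- n)).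
Proof. by move=> x; rewrite -Tpow_add addNr. Qed.

Lemma Timg_pre n D : Timg T Tinv n D = Tpow T Tinv (- n) @^-1` D.
Proof.
rewrite /Timg; apply/seteqP; split => x /=.
- by case=> y Dy <-; rewrite (TpowK n y).
- move=> Dx; exists (Tpow T Tinv (- n) x) => //.
  by have := TpowK (- n) x; rewrite opprK.
Qed.

Lemma iter_meas (f : X -> X) k : measurable_fun setT f ->
  (forall A, measurable A -> mu (f @^-1` A) = mu A) ->
  forall A, measurable A -> measurable (iter k f @^-1` A) /\ mu (iter k f @^-1` A) = mu A.
Proof.
move=> mf pf; elim: k => [|k IH] A mA; first by [].
have mfA : measurable (f @^-1` A) by rewrite -[_ @^-1` _]setTI; apply: mf.
have [m1 e1] := IH _ mfA.
have -> : iter k.+1 f @^-1` A = iter k f @^-1` (f @^-1` A).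
  by apply/seteqP; split => x; rewrite /preimage /=.
by rewrite e1 pf.
Qed.

Lemma Tpow_meas n A : measurable A ->
  measurable (Tpow T Tinv n @^-1` A) /\ mu (Tpow T Tinv n @^-1` A) = mu A.
Proof.
case: HT => _ _ mT mTi pT.
case: n => k /=.
- by apply: iter_meas.
- apply: iter_meas => // B mB.
  have e : T @^-1` (Tinv @^-1` B) = B.
    by apply/seteqP; split => x; rewrite /preimage /= TK.
  rewrite -{2}e pT //; rewrite -[_ @^-1` _]setTI; exact: mTi.
Qed.

Lemma Timg_meas n A : measurable A -> measurable (Timg T Tinv n A).
Proof. by move=> mA; rewrite Timg_pre; case: (Tpow_meas (- n) A mA). Qed.

Lemma iterT_meas k A : measurable A ->
  measurable (iter k T @^-1` A) /\ mu (iter k T @^-1` A) = mu A.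
Proof. by case: HT => _ _ mT _ pT; apply: iter_meas. Qed.

Lemma sum_lb (f : nat -> R) (M : nat) (c : R) : (0 < M)%N ->
  (forall n, 0 <= f n) -> (forall k, f (k * M)%N = c) ->
  forall K, K%:R * c <= \sum_(0 <= n < K * M) f n.
Proof.
move=> M0 f0 fc; elim => [|K IH]; first by rewrite mul0r mul0n big_geq.
rewrite mulSn addnC (big_cat_nat _ (leq_addr _ _)) //= (big_ltn (n:=(K*M+M)%N)); last first.
  by rewrite -{1}[(K * M)%N]addn0 ltn_add2l.
rewrite fc -natr1 mulrDl mul1r lerD // lerDl.
by apply: sumr_ge0 => i _.
Qed.

Lemma exists_disj (M : nat) : (0 < M)%N -> nontrivial mu -> weak_mixing mu T ->
  exists D, [/\ measurable D, (0 < mu D)%E & D `&` (iter M T @^-1` D) = set0].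
Proof.
move=> M0 [A [mA [A0 A1]]] WM.
have [[D0 [mD0 pD0]]|H] := pselect (exists D0, measurable D0 /\
    (0 < mu (D0 `\` (iter M T @^-1` D0)))%E).
  exists (D0 `\` (iter M T @^-1` D0)); split => //.
    by apply: measurableD => //; case: (iterT_meas M D0 mD0).
  by apply/seteqP; split => x // [[_ nx] [/= + _]].
exfalso.
have H0 : forall D, measurable D -> mu (D `\` (iter M T @^-1` D)) = 0%E.
  move=> D mD; apply/eqP; rewrite -measure_le0 leNgt; apply/negP => h.
  by apply: H; exists D.
have Hk : forall k, mu (A `\` (iter (k * M) T @^-1` A)) = 0%E.
  elim => [|k IH].
    by rewrite mul0n; rewrite (_ : _ `\` _ = set0) ?measure0 //;
      apply/seteqP; split => x // [].
  have [m1 _] := iterT_meas (k * M) A mA.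
  have [m2 _] := iterT_meas M A mA.
  have m3 : measurable (A `\` (iter M T @^-1` A)) by apply: measurableD.
  have [m4 e4] := iterT_meas (k * M) _ m3.
  apply: (@subset_measure0 _ _ _ mu _ ((A `\` (iter (k * M) T @^-1` A)) `|`
     (iter (k * M) T @^-1` (A `\` (iter M T @^-1` A))))).
  - apply: measurableD => //; case: (iterT_meas (k.+1 * M) A mA) => //.
  - by apply: measurableU => //; apply: measurableD.
  - move=> x [Ax nx]; rewrite /= mulSn iterD in nx.
    have [h|h] := pselect (A (iter (k * M) T x)); last by left.
    by right.
  - apply/eqP; rewrite -measure_le0.
    apply: (le_trans (measureU2 _ _ _)) => //; first by apply: measurableD.
    change (mu (A `\` iter (k * M) T @^-1` A) + mu (iter (k * M) T @^-1` (A `\` iter M T @^-1` A)) <= 0%R)%E.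
    by rewrite IH e4 H0 // adde0.
have Hk2 : forall k, fine (mu (A `&` (iter (k * M) T @^-1` A))) = fine (mu A).
  move=> k; have [m1 _] := iterT_meas (k * M) A mA.
  have e : mu A = (mu (A `\` iter (k * M) T @^-1` A) + mu (A `&` iter (k * M) T @^-1` A))%E
    := measureDI mu mA m1.
  by rewrite e Hk add0e.
set p := fine (mu A).
have p0 : 0 < p by rewrite /p fine_gt0 // A0 /= (lt_le_trans A1) // leey.
have p1 : p < 1 by rewrite /p -lte_fin fineK // ge0_fin_numE // (lt_le_trans A1) // leey.
set c := p - p * p.
have c0 : 0 < c by rewrite /c subr_gt0 gtr_pMr.
have := WM A A mA mA; move/cvgr0_norm_lt => /(_ (c / M%:R)).
have cM : 0 < c / M%:R by rewrite divr_gt0 // ltr0n.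
case/(_ cM) => N0 _ HN0.
have /HN0 : (N0 <= N0.+1 * M)%N.
  by apply: (leq_trans (leqnSn N0)); rewrite leq_pmulr.
apply/negP; rewrite -leNgt /=.
pose f := fun n => (`|fine (mu (A `&` (iter n T @^-1` A))) - p * p| : R).
have f0 : forall n, 0 <= f n by move=> n; apply: normr_ge0.
have fc : forall k, f (k * M)%N = c by move=> k; rewrite /f Hk2 -/p gtr0_norm.
have := @sum_lb f M c M0 f0 fc N0.+1.
rewrite big_mkord => hs.
change (c / M%:R <= `|(N0.+1 * M)%:R^-1 * \sum_(n < N0.+1 * M) f n|).
rewrite ger0_norm; last by apply: mulr_ge0 => //; apply: sumr_ge0.
have Mp : 0 < M%:R :> R by rewrite ltr0n.
have Np : 0 < N0.+1%:R :> R by rewrite ltr0n.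
rewrite natrM invfM -mulrA ler_pdivlMl // mulrA.
by rewrite [X in _ <= X]mulrC ler_pM2r ?invr_gt0.
Qed.

Lemma main_aux (S : set int) (m : int) : nontrivial mu -> weak_mixing mu T ->
  rigidity_set mu T Tinv S -> m != 0 ->
  ~ strong_recurrence_set mu T Tinv [set n + m | n in S].
Proof.
move=> NT WM [_ Hrig] m0 Hsr.
have M0 : (0 < `|m|)%N by rewrite absz_gt0.
have [D [mD D0 Ddisj]] := @exists_disj `|m|%N M0 NT WM.
have Ddisj' : D `&` Timg T Tinv m D = set0.
  rewrite Timg_pre; apply/seteqP; split => x // [Dx Dy].
  have [mge|mlt] := leP 0 m.
  - have e : m = Posz `|m| by lia.
    have hx : Tpow T Tinv (Posz `|m|) (Tpow T Tinv (- m) x) = x.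
      by rewrite -e; have := TpowK (- m) x; rewrite opprK.
    have : (D `&` iter `|m| T @^-1` D) (Tpow T Tinv (- m) x).
      by split => //; rewrite /preimage /=; rewrite -[iter _ _ _]/(Tpow T Tinv (Posz `|m|) _) hx.
    by rewrite Ddisj.
  - have e : - m = Posz `|m| by lia.
    rewrite e in Dy.
    have : (D `&` iter `|m| T @^-1` D) x by split.
    by rewrite Ddisj.
have [c c0 Hinf] := Hsr D mD D0.
have Hfin := Hrig D c mD c0.
apply: Hinf; apply: sub_finite_set (finite_image (fun n => n + m) Hfin).
move=> k [[n Sn <-] hk]; exists n => //; split => //.
apply: (lt_le_trans hk); apply: le_measure; rewrite ?inE.
- by apply: measurableI => //; apply: Timg_meas.
- by apply: measurableU; apply: measurableD => //; apply: Timg_meas.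
- move=> x [Dx [a Da ha]]; left; split => // -[b Db hb].
  have eab : Tpow T Tinv m a = b.
    by have := TpowK n (Tpow T Tinv m a); rewrite -(Tpow_add n m a) ha -hb (TpowK n b) => ->.
  have : (D `&` Timg T Tinv m D) b by split => //; exists a.
  by rewrite Ddisj'.
Qed.

End Aux.

Theorem lemma4p1 (d : measure_display) (X : measurableType d) (R : realType)
  (mu : probability X R) (T Tinv : X -> X) (S : set int) (m : int) :
  mps mu T Tinv -> nontrivial mu -> weak_mixing mu T ->
  rigidity_set mu T Tinv S -> m != 0 ->
  ~ strong_recurrence_set mu T Tinv [set n + m | n in S].
Proof.
move=> HT NT WM Hr m0.
exact: (@main_aux d X R mu T Tinv HT S m NT WM Hr m0).
Qed.
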